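(* Let $N\ge 1$, $l>0$, $\Delta\tau>0$, $L>(N+1)l$ and $v_{0,\min}\le v_{0,\max}$, and consider the platoon system with state $y=(\tilde x_1,\tilde v_1,\dots,\tilde x_N,\tilde v_N,v_0)\in\mathbb{R}^{2N+1}$, input $u=(u_0,\dots,u_N)\in\mathbb{U}$ and disturbance $w\in\mathbb{W}$: $$\tilde x_i^+=\tilde x_i+\tilde v_i\Delta\tau+(u_0-u_i)\tfrac{\Delta\tau^2}{2}+w_{0,x}-w_{i,x},\quad \tilde v_i^+=\tilde v_i+(u_0-u_i)\Delta\tau+w_{0,v}-w_{i,v}\ (i=1,\dots,N),\quad v_0^+=v_0+u_0\Delta\tau+w_{0,v}.$$ Let $\Omega_0,\dots,\Omega_N$, $I_0,\dots,I_N$, $J_{i,x},J_{i,v}$ be as in the context, and let $\mu_i:\Omega_i\to I_i$ ($i=1,\dots,N$) and $\mu_0:\Omega_0\to I_0$ be invariance-inducing maps as defined in the context. Define, on $\Omega=\{y:(\tilde x_i,\tilde v_i)\in\Omega_i\ (i=1,\dots,N),\ v_0\in\Omega_0\}$, the feedback $u=\mu(y)$ by $u_0=\mu_0(v_0)$ and $u_i=\mu_0(v_0)-\mu_i(\tilde x_i,\tilde v_i)$ for $i=1,\dots,N$. Then $\mu(y)\in\mathbb{U}$ for all $y\in\Omega$, and for every initial state $y(0)\in\Omega$ and every disturbance sequence $(w(k))_{k\ge0}$ with $w(k)\in\mathbb{W}$, the closed-loop trajectory $y(k+1)=$ (platoon update with $u=\mu(y(k))$, $w=w(k)$) satisfies,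 for all $k\ge 0$: $\tilde x_i(k)\ge\tilde x_{i-1}(k)+l$ for $i=1,\dots,N$ (with $\tilde x_0:=0$), $\tilde x_N(k)\le L$, and $v_0(k)\in[v_{0,\min},v_{0,\max}]$. That is, $\mu$ solves the safe platoon control problem (belongs to the set $\mathbb{M}$ of control policies guaranteeing these constraints for all times and all admissible disturbances).
   Context: A platoon consists of $N+1$ vehicles indexed $0$ (the leader) to $N$, all of length $l$. Vehicle $i$ has absolute position $x_i$, velocity $v_i$, control input $u_i$ and additive disturbances $w_{i,x},w_{i,v}$, with dynamics $x_i^+=x_i+v_i\Delta\tau+u_i\frac{\Delta\tau^2}{2}+w_{i,x}$, $v_i^+=v_i+u_i\Delta\tau+w_{i,v}$. Admissible inputs: $\mathbb{U}=\prod_{i=0}^N[u_{i,\min},u_{i,\max}]$; admissible disturbances: $w=(w_{i,s})\in\mathbb{W}=\prod_{i=0}^N[w_{i,x,\min},w_{i,x,\max}]\times[w_{i,v,\min},w_{i,v,\max}]$. Relative coordinates are $\tilde x_i=x_0-x_i$, $\tilde v_i=v_0-v_i$. Envelope sets: for $i=1,\dots,N$, $\mathbb{S}_i=\{(\tilde x_i,\tilde v_i)\in\mathbb{R}^2 : il+(i-1)\frac{L-Nl}{N}\le\tilde x_i\le il+i\frac{L-Nl}{N}\}$, and $\mathbb{S}_0=[v_{0,\min},v_{0,\max}]$. Relative inputs and disturbances: $\tilde u_0=u_0$, $\tilde u_i=u_0-u_i$, $\tilde w_{0,s}=w_{0,s}$, $\tilde w_{i,s}=w_{0,s}-w_{i,s}$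 ($s=x,v$). Let $\mathcal{U}=\{\tilde u:u\in\mathbb{U}\}$, $\mathcal{W}=\{\tilde w:w\in\mathbb{W}\}$. $\prod_{i=0}^N I_i$ is any hyper-rectangle contained in $\mathcal{U}$, and $\prod_{i=0}^N J_{i,x}\times J_{i,v}$ is any hyper-rectangle containing $\mathcal{W}$. For $i=1,\dots,N$, $\Omega_i\subseteq\mathbb{S}_i$, and $\mu_i:\Omega_i\to I_i$ satisfies: for every $(\tilde x,\tilde v)\in\Omega_i$, with $\tilde u=\mu_i(\tilde x,\tilde v)$, one has $(\tilde x+\tilde v\Delta\tau+\tilde u\frac{\Delta\tau^2}{2}+\omega_x,\ \tilde v+\tilde u\Delta\tau+\omega_v)\in\Omega_i$ for all $\omega_x\in J_{i,x}$, $\omega_v\in J_{i,v}$. Also $\Omega_0\subseteq\mathbb{S}_0$ and $\mu_0:\Omega_0\to I_0$ satisfies $v+\mu_0(v)\Delta\tau+\omega\in\Omega_0$ for all $v\in\Omega_0$ and all $\omega\in[w_{0,v,\min},w_{0,v,\max}]$. *)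

(* Defs.v *)
From Stdlib Require Import Reals Lra Lia.
Open Scope R_scope.

(* Vehicles are indexed by nat; only indices 0..N are meaningful.
   State y = (xt_1,vt_1,...,xt_N,vt_N,v0): components xt i, vt i for 1<=i<=N
   (values at other indices are irrelevant and never constrained/used). *)
Record pstate := mkState { xt : nat -> R; vt : nat -> R; v0 : R }.

Definition InU (N : nat) (umin umax : nat -> R) (u : nat -> R) : Prop :=
  forall i, (i <= N)%nat -> umin i <= u i <= umax i.

Definition InW (N : nat) (wxmin wxmax wvmin wvmax : nat -> R)
  (wx wv : nat -> R) : Prop :=
  forall i, (i <= N)%nat ->
    wxmin i <= wx i <= wxmax i /\ wvmin i <= wv i <= wvmax i.

Definition rel (a : nat -> R) : nat -> R :=
  fun i => match i with O => a O | _ => a O - a i end.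

Definition InUrel (N : nat) (umin umax : nat -> R) (ut : nat -> R) : Prop :=
  exists u, InU N umin umax u /\ forall i, (i <= N)%nat -> ut i = rel u i.

Definition is_interval (S : R -> Prop) : Prop :=
  forall a b c, S a -> S c -> a <= b <= c -> S b.

Definition Senv (N : nat) (l L : R) (i : nat) (z : R * R) : Prop :=
  INR i * l + (INR i - 1) * ((L - INR N * l) / INR N) <= fst z <=
  INR i * l + INR i * ((L - INR N * l) / INR N).

Definition step (dt : R) (y : pstate) (u wx wv : nat -> R) : pstate :=
  mkState
    (fun i => xt y i + vt y i * dt + (u O - u i) * (dt ^ 2 / 2) + wx O - wx i)
    (fun i => vt y i + (u O - u i) * dt + wv O - wv i)
    (v0 y + u O * dt + wv O).

Definition mu_fb (mu0 : R -> R) (mu : nat -> R * R -> R) (y : pstate)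
  : nat -> R :=
  fun i => match i with
           | O => mu0 (v0 y)
           | _ => mu0 (v0 y) - mu i (xt y i, vt y i)
           end.

Definition InOmega (N : nat) (Omega : nat -> R * R -> Prop)
  (Omega0 : R -> Prop) (y : pstate) : Prop :=
  (forall i, (1 <= i <= N)%nat -> Omega i (xt y i, vt y i)) /\ Omega0 (v0 y).

Fixpoint traj (dt : R) (mu0 : R -> R) (mu : nat -> R * R -> R)
  (y0 : pstate) (wxs wvs : nat -> nat -> R) (k : nat) : pstate :=
  match k with
  | O => y0
  | S k' => let y := traj dt mu0 mu y0 wxs wvs k' in
            step dt y (mu_fb mu0 mu y) (wxs k') (wvs k')
  end.

Definition xprev (y : pstate) (i : nat) : R :=
  if Nat.eqb i 1 then 0 else xt y (i - 1).

Definition safe (N : nat) (l L v0min v0max : R) (y : pstate) : Prop :=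
  (forall i, (1 <= i <= N)%nat -> xt y i >= xprev y i + l) /\
  xt y N <= L /\ v0min <= v0 y <= v0max.

(* Main.v *)
Require Import Defs.
From Stdlib Require Import Reals Lra Lia.
Open Scope R_scope.

Theorem proposition3
  (N : nat) (l dt L v0min v0max : R)
  (umin umax wxmin wxmax wvmin wvmax : nat -> R)
  (I Jx Jv : nat -> R -> Prop)
  (Omega : nat -> R * R -> Prop) (Omega0 : R -> Prop)
  (mu : nat -> R * R -> R) (mu0 : R -> R) :
  (1 <= N)%nat -> 0 < l -> 0 < dt -> INR (N + 1) * l < L -> v0min <= v0max ->
  (* prod_i I_i is a hyper-rectangle contained in script U *)
  (forall i, (i <= N)%nat -> is_interval (I i)) ->
  (forall ut, (forall i, (i <= N)%nat -> I i (ut i)) -> InUrel N umin umax ut) ->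
  (* prod_i J_{i,x} x J_{i,v} is a hyper-rectangle containing script W *)
  (forall i, (i <= N)%nat -> is_interval (Jx i) /\ is_interval (Jv i)) ->
  (forall wx wv, InW N wxmin wxmax wvmin wvmax wx wv ->
     forall i, (i <= N)%nat -> Jx i (rel wx i) /\ Jv i (rel wv i)) ->
  (* Omega_i subset of S_i, and mu_i : Omega_i -> I_i invariance-inducing *)
  (forall i, (1 <= i <= N)%nat -> forall z, Omega i z -> Senv N l L i z) ->
  (forall i, (1 <= i <= N)%nat -> forall z, Omega i z ->
     I i (mu i z) /\
     forall wx wv, Jx i wx -> Jv i wv ->
       Omega i (fst z + snd z * dt + mu i z * (dt ^ 2 / 2) + wx,
                snd z + mu i z * dt + wv)) ->
  (* Omega_0 subset of S_0, and mu_0 : Omega_0 -> I_0 invariance-inducing *)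
  (forall v, Omega0 v -> v0min <= v <= v0max) ->
  (forall v, Omega0 v ->
     I O (mu0 v) /\
     forall w, wvmin O <= w <= wvmax O -> Omega0 (v + mu0 v * dt + w)) ->
  (forall y, InOmega N Omega Omega0 y -> InU N umin umax (mu_fb mu0 mu y)) /\
  (forall (y0 : pstate) (wxs wvs : nat -> nat -> R),
     InOmega N Omega Omega0 y0 ->
     (forall k, InW N wxmin wxmax wvmin wvmax (wxs k) (wvs k)) ->
     forall k, safe N l L v0min v0max (traj dt mu0 mu y0 wxs wvs k)).
Proof.
  intros HN Hl Hdt HL Hv HI HIU HJ HWJ HOS HOmu HO0 HO0mu.
  assert (Hfb : forall y, InOmega N Omega Omega0 y -> forall i, (1 <= i)%nat ->
            mu_fb mu0 mu y O - mu_fb mu0 mu y i = mu i (Defs.xt y i, vt y i)).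
  { intros y _ i Hi. destruct i as [|i]; [lia|]. simpl. ring. }
  assert (Inv : forall y wx wv, InOmega N Omega Omega0 y ->
            InW N wxmin wxmax wvmin wvmax wx wv ->
            InOmega N Omega Omega0 (step dt y (mu_fb mu0 mu y) wx wv)).
  { intros y wx wv Hy Hw. split.
    - intros i Hi. unfold step. cbn [Defs.xt vt].
      rewrite (Hfb y Hy i ltac:(lia)).
      destruct Hy as [Hy _].
      destruct (HOmu i Hi _ (Hy i Hi)) as [_ H].
      destruct (HWJ wx wv Hw i ltac:(lia)) as [H1 H2].
      assert (E: rel wx i = wx O - wx i /\ rel wv i = wv O - wv i).
      { destruct i as [|i]; [lia|]. simpl. auto. }
      destruct E as [E1 E2]. rewrite E1 in H1. rewrite E2 in H2.
      specialize (H _ _ H1 H2). simpl in H.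
      replace (Defs.xt y i + vt y i * dt + mu i (Defs.xt y i, vt y i) * (dt ^ 2 / 2) + wx 0%nat - wx i)
        with (Defs.xt y i + vt y i * dt + mu i (Defs.xt y i, vt y i) * (dt ^ 2 / 2) + (wx 0%nat - wx i)) by ring.
      replace (vt y i + mu i (Defs.xt y i, vt y i) * dt + wv 0%nat - wv i)
        with (vt y i + mu i (Defs.xt y i, vt y i) * dt + (wv 0%nat - wv i)) by ring.
      exact H.
    - destruct Hy as [_ Hy]. simpl.
      destruct (HO0mu _ Hy) as [_ H]. apply H.
      destruct (Hw O ltac:(lia)) as [_ H2]. exact H2. }
  split.
  - intros y Hy.
    assert (Hut : InUrel N umin umax (rel (mu_fb mu0 mu y))).
    { apply HIU. intros i Hi. destruct i as [|i].
      + simpl. destruct Hy as [_ Hy]. apply (HO0mu _ Hy).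
      + simpl. replace (mu0 (v0 y) - (mu0 (v0 y) - mu (S i) (Defs.xt y (S i), vt y (S i))))
          with (mu (S i) (Defs.xt y (S i), vt y (S i))) by ring.
        destruct Hy as [Hy _]. apply (HOmu (S i) ltac:(lia) _ (Hy (S i) ltac:(lia))). }
    destruct Hut as [u [Hu Heq]].
    assert (Hu0 : u O = mu_fb mu0 mu y O) by (symmetry; apply (Heq O); lia).
    intros i Hi. destruct i as [|i].
    + rewrite <- Hu0. apply Hu; lia.
    + assert (E := Heq (S i) Hi). simpl in E. simpl in Hu0.
      assert (u (S i) = mu_fb mu0 mu y (S i)) by (simpl; lra).
      rewrite <- H. apply Hu; lia.
  - intros y0 wxs wvs Hy0 Hw k.
    assert (HO : InOmega N Omega Omega0 (traj dt mu0 mu y0 wxs wvs k)).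
    { induction k as [|k IH]; simpl; auto. }
    set (y := traj dt mu0 mu y0 wxs wvs k) in *.
    destruct HO as [HOi HOv].
    assert (HNr : 0 < INR N) by (apply lt_0_INR; lia).
    set (d := (L - INR N * l) / INR N).
    assert (Hd : INR N * d = L - INR N * l) by (unfold d; field; lra).
    repeat split.
    + intros i Hi. unfold xprev.
      destruct (HOS i Hi _ (HOi i Hi)) as [A _]. simpl in A. fold d in A.
      destruct (Nat.eqb_spec i 1) as [E|E].
      * subst i. simpl in A. lra.
      * assert (Hi' : (1 <= i - 1 <= N)%nat) by lia.
        destruct (HOS _ Hi' _ (HOi _ Hi')) as [_ B]. simpl in B. fold d in B.
        rewrite minus_INR in B by lia. simpl in B. nra.
    + destruct (HOS N ltac:(lia) _ (HOi N ltac:(lia))) as [_ B]. simpl in B. fold d in B. lra.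
    + apply (HO0 _ HOv).
    + apply (HO0 _ HOv).
Qed.
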